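(* Any non-abelian Lie superalgebra does not possess simultaneously a quadratic structure and an odd-quadratic structure.
   Context: All vector spaces are finite dimensional over an algebraically closed field $\mathbb{K}$ of characteristic zero. A Lie superalgebra is $\mathfrak{g}=\mathfrak{g}_{\bar{0}}\oplus\mathfrak{g}_{\bar{1}}$. A quadratic (resp. odd-quadratic) structure on $\mathfrak{g}$ is a non-degenerate, supersymmetric, invariant bilinear form on $\mathfrak{g}$ which is even, i.e. $B(\mathfrak{g}_{\bar{0}},\mathfrak{g}_{\bar{1}})=\{0\}$ (resp. odd, i.e. $B(\mathfrak{g}_{\bar{0}},\mathfrak{g}_{\bar{0}})=B(\mathfrak{g}_{\bar{1}},\mathfrak{g}_{\bar{1}})=\{0\}$). *)

(* Defs.v *)
From HB Require Import structures.
From mathcomp Require Import all_boot all_order all_algebra.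
Set Implicit Arguments. Unset Strict Implicit. Unset Printing Implicit Defensive.
Import GRing.Theory.
Local Open Scope ring_scope.

(* A finite-dimensional Lie superalgebra over K is modelled as a finite
   dimensional K-vector space V (vectType) with a Z/2-grading V = g0 (+) g1
   (two subspaces in direct sum spanning V), parities being booleans
   (false = even, true = odd), and a bracket br : V -> V -> V. *)

Section LieSuper.
Variables (K : fieldType) (V : vectType K).

Definition psign (a b : bool) : K := (-1) ^+ (a && b).

Definition gpart (g0 g1 : {vspace V}) (b : bool) : {vspace V} :=
  if b then g1 else g0.

Definition lie_superalgebra (g0 g1 : {vspace V}) (br : V -> V -> V) : Prop :=
  [/\ (g0 + g1 = fullv)%VS /\ (g0 :&: g1 = 0)%VS,
      (forall (c : K) (x y z : V), br (c *: x + y) z = c *: br x z + br y z) /\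
      (forall (c : K) (x y z : V), br x (c *: y + z) = c *: br x y + br x z),
      (forall (a b : bool) (x y : V), x \in gpart g0 g1 a -> y \in gpart g0 g1 b ->
         br x y \in gpart g0 g1 (a (+) b)),
      (forall (a b : bool) (x y : V), x \in gpart g0 g1 a -> y \in gpart g0 g1 b ->
         br x y = - (psign a b *: br y x)) &
      (forall (a b c : bool) (x y z : V),
         x \in gpart g0 g1 a -> y \in gpart g0 g1 b -> z \in gpart g0 g1 c ->
         psign a c *: br x (br y z) + psign b a *: br y (br z x)
           + psign c b *: br z (br x y) = 0)].

Definition abelian_bracket (br : V -> V -> V) : Prop := forall x y : V, br x y = 0.

Definition nondeg_supersym_invariant_form (g0 g1 : {vspace V})
    (br : V -> V -> V) (B : V -> V -> K) : Prop :=
  [/\ (forall (c : K) (x y z : V), B (c *: x + y) z = c * B x z + B y z),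
      (forall (c : K) (x y z : V), B x (c *: y + z) = c * B x y + B x z),
      (forall x : V, (forall y : V, B x y = 0) -> x = 0),
      (forall (a b : bool) (x y : V), x \in gpart g0 g1 a -> y \in gpart g0 g1 b ->
         B x y = psign a b * B y x) &
      (forall x y z : V, B (br x y) z = B x (br y z))].

Definition quadratic_structure g0 g1 br (B : V -> V -> K) : Prop :=
  nondeg_supersym_invariant_form g0 g1 br B /\
  (forall x y : V, x \in g0 -> y \in g1 -> B x y = 0).

Definition odd_quadratic_structure g0 g1 br (B : V -> V -> K) : Prop :=
  nondeg_supersym_invariant_form g0 g1 br B /\
  (forall x y : V, x \in g0 -> y \in g0 -> B x y = 0) /\
  (forall x y : V, x \in g1 -> y \in g1 -> B x y = 0).

End LieSuper.

(* Main.v *)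
Require Import Defs.
From HB Require Import structures.
From mathcomp Require Import all_boot all_order all_algebra.
Set Implicit Arguments. Unset Strict Implicit. Unset Printing Implicit Defensive.
Import GRing.Theory.
Local Open Scope ring_scope.

Lemma formL_sum (K : fieldType) (V : vectType K) (B : V -> V -> K) n
  (c : 'I_n -> K) (f : 'I_n -> V) z :
  (forall (c : K) (x y z : V), B (c *: x + y) z = c * B x z + B y z) ->
  B (\sum_i c i *: f i) z = \sum_i c i * B (f i) z.
Proof.
move=> BL.
have B0 : B 0 z = 0.
  have := BL 1 0 0 z; rewrite scale1r addr0 mul1r => h.
  by apply: (@addrI _ (B 0 z)); rewrite addr0 -h.
apply: (big_rec2 (fun s t => B t z = s)) => // i y1 y2 _ <-.
by rewrite BL.
Qed.

Lemma formR_sum (K : fieldType) (V : vectType K) (B : V -> V -> K) n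
  (c : 'I_n -> K) (f : 'I_n -> V) x :
  (forall (c : K) (x y z : V), B x (c *: y + z) = c * B x y + B x z) ->
  B x (\sum_i c i *: f i) = \sum_i c i * B x (f i).
Proof.
move=> BR.
have B0 : B x 0 = 0.
  have := BR 1 x 0 0; rewrite scale1r addr0 mul1r => h.
  by apply: (@addrI _ (B x 0)); rewrite addr0 -h.
apply: (big_rec2 (fun s t => B x t = s)) => // i y1 y2 _ <-.
by rewrite BR.
Qed.

Definition Drep (K : fieldType) (V : vectType K) (B B' : V -> V -> K) (x : V) : V :=
  let e := vbasis (fullv : {vspace V}) in
  let M : 'M[K]_(\dim (fullv : {vspace V})) := \matrix_(i, j) B e`_i e`_j in
  \sum_i ((\row_j B' x e`_j) *m invmx M) 0 i *: e`_i.

Lemma DrepP (K : fieldType) (V : vectType K) (B B' : V -> V -> K) :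
  (forall (c : K) (x y z : V), B (c *: x + y) z = c * B x z + B y z) ->
  (forall (c : K) (x y z : V), B x (c *: y + z) = c * B x y + B x z) ->
  (forall x : V, (forall y : V, B x y = 0) -> x = 0) ->
  (forall (c : K) (x y z : V), B' x (c *: y + z) = c * B' x y + B' x z) ->
  forall x y, B (Drep B B' x) y = B' x y.
Proof.
move=> BL BR Bnd CR x y.
set e := vbasis (fullv : {vspace V}).
set M : 'M[K]_(\dim (fullv : {vspace V})) := \matrix_(i, j) B e`_i e`_j.
have freee : free e by case/andP: (vbasisP (fullv : {vspace V})).
have key : forall (v : 'rV[K]_(\dim (fullv : {vspace V}))) (j : 'I_(\dim (fullv : {vspace V}))),
    B (\sum_i v 0 i *: e`_i) e`_j = (v *m M) 0 j.
  move=> v j; rewrite formL_sum // mxE; apply: eq_bigr => i _; by rewrite mxE.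
have Mu : M \in unitmx.
  rewrite -row_free_unit -kermx_eq0; apply/rowV0P => v /sub_kermxP vM0.
  have x0 : \sum_i v 0 i *: e`_i = 0.
    apply: Bnd => y'.
    rewrite (coord_vbasis (memvf y')) formR_sum //.
    apply: big1 => j _; by rewrite key vM0 mxE mulr0.
  apply/rowP => i; rewrite mxE.
  exact: (freeP freee (fun i => v 0 i) x0 i).
rewrite /Drep -/e -/M.
rewrite (coord_vbasis (memvf y)) formR_sum // (formR_sum _ _ _ CR).
apply: eq_bigr => j _; congr (_ * _).
by rewrite key mulmxKV // mxE.
Qed.

Theorem mainTheorem5 (K : closedFieldType) (charK0 : [pchar K]%R =i pred0)
  (V : vectType K) (g0 g1 : {vspace V}) (br : V -> V -> V) :
  lie_superalgebra g0 g1 br ->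
  ~ abelian_bracket br ->
  ~ ((exists B : V -> V -> K, quadratic_structure g0 g1 br B) /\
     (exists B : V -> V -> K, odd_quadratic_structure g0 g1 br B)).
Proof.
move=> [[Hsum _] [brL brR] Hgr Hskew _] Hna [[B [[BL BR Bnd Bsym Binv] Beven]]
  [C [[CL CR Cnd Csym Cinv] [C00 C11]]]].
apply: Hna.
pose D := Drep B C.
have hD : forall x y, B (D x) y = C x y by exact: DrepP.
have decomp : forall v, exists2 u0, u0 \in g0 & exists2 u1, u1 \in g1 & v = u0 + u1.
  by move=> v; apply/memv_addP; rewrite Hsum memvf.
have B0 : forall z, B 0 z = 0.
  by move=> z; have := BL 1 0 0 z; rewrite scale1r addr0 mul1r => h;
     apply: (@addrI _ (B 0 z)); rewrite addr0 -h.
have C0 : forall z, C 0 z = 0.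
  by move=> z; have := CL 1 0 0 z; rewrite scale1r addr0 mul1r => h;
     apply: (@addrI _ (C 0 z)); rewrite addr0 -h.
have Bext : forall u v, (forall z, B u z = B v z) -> u = v.
  move=> u v h; apply/eqP; rewrite -subr_eq0; apply/eqP/Bnd => z.
  by rewrite -scaleN1r addrC BL h mulN1r addNr.
have DZ : forall c u, D (c *: u) = c *: D u.
  move=> c u; apply: Bext => z; rewrite hD -[c *: D u]addr0 BL -[c *: u]addr0 CL.
  by rewrite hD B0 C0.
have DD : forall u v, D (u + v) = D u + D v.
  move=> u v; apply: Bext => z.
  have CD : C (u + v) z = C u z + C v z by have := CL 1 u v z; rewrite scale1r mul1r.
  have BD' : B (D u + D v) z = B (D u) z + B (D v) z by have := BL 1 (D u) (D v) z; rewrite scale1r mul1r.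
  by rewrite hD BD' !hD CD.
have Dinj : forall u, D u = 0 -> u = 0.
  by move=> u Du; apply: Cnd => z; rewrite -hD Du B0.
have BD : forall u v w, B (u + v) w = B u w + B v w.
  by move=> u v w; have := BL 1 u v w; rewrite scale1r mul1r.
have BRD : forall u v w, B w (u + v) = B w u + B w v.
  by move=> u v w; have := BR 1 w u v; rewrite scale1r mul1r.
have B10 : forall u v, u \in g1 -> v \in g0 -> B u v = 0.
  move=> u v hu hv; rewrite (Bsym true false) //= /psign /= expr0 mul1r.
  exact: Beven.
have Dpar : forall a x, x \in gpart g0 g1 a -> D x \in gpart g0 g1 (~~ a).
  move=> a x hx; have [u0 h0 [u1 h1 e]] := decomp (D x).
  case: a hx => /= hx.
    suff u10 : u1 = 0 by rewrite e u10 addr0.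
    apply: Bnd => y; have [y0 hy0 [y1 hy1 ->]] := decomp y.
    have E : forall w, B u1 w = B (D x) w - B u0 w by move=> w; rewrite e BD addrC addKr.
    rewrite BRD (B10 _ _ h1 hy0) add0r E hD C11 // Beven // subrr //.
  suff u00 : u0 = 0 by rewrite e u00 add0r.
  apply: Bnd => y; have [y0 hy0 [y1 hy1 ->]] := decomp y.
  have E : forall w, B u0 w = B (D x) w - B u1 w by move=> w; rewrite e BD addrK.
  rewrite BRD (Beven _ _ h0 hy1) addr0 E hD C00 // B10 // subrr //.
have S3 : forall x y, D (br x y) = br (D x) y.
  move=> x y; apply: Bext => z; by rewrite hD Cinv -hD Binv.
have S4 : forall a b x y, x \in gpart g0 g1 a -> y \in gpart g0 g1 b ->
    D (br x y) = (psign K a b * psign K (~~ b) a) *: br x (D y).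
  move=> a b x y hx hy.
  rewrite (Hskew a b x y hx hy) -scaleN1r DZ DZ S3.
  rewrite (Hskew (~~ b) a (D y) x (Dpar _ _ hy) hx).
  by rewrite !scalerN scaleN1r opprK scalerA.
have h2 : (2%:R : K) != 0 by rewrite ((pcharf0P K).1 charK0 2).
have hom : forall a b x y, x \in gpart g0 g1 a -> y \in gpart g0 g1 b -> br x y = 0.
  move=> a b x y hx hy.
  apply: (Dinj); apply: (Dinj).
  have e1 : D (D (br x y)) = (psign K (~~ a) b * psign K (~~ b) (~~ a)) *: br (D x) (D y).
    by rewrite S3 (S4 (~~ a) b (D x) y (Dpar _ _ hx) hy).
  have e2 : br (D x) (D y) = (psign K a b * psign K (~~ b) a) *: D (D (br x y)).
    rewrite -S3 (S4 a b x y hx hy) DZ scalerA.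
    by case: a {hx e1}; case: b {hy} => /=; rewrite /psign /= ?expr0 ?expr1 ?mulr1 ?mul1r ?mulrN1 ?opprK ?scale1r.
  move: e1; rewrite e2 scalerA.
  set w := D (D (br x y)).
  have -> : psign K (~~ a) b * psign K (~~ b) (~~ a) * (psign K a b * psign K (~~ b) a) = -1.
    by case: a {hx e2 w}; case: b {hy} => /=; rewrite /psign /= ?expr0 ?expr1 ?mulr1 ?mul1r ?mulrN1 ?mulN1r ?opprK.
  rewrite scaleN1r => /eqP; rewrite -subr_eq0 opprK -mulr2n -scaler_nat scaler_eq0.
  by rewrite (negbTE h2) /= => /eqP.
move=> x y.
have [x0 hx0 [x1 hx1 ->]] := decomp x; have [y0 hy0 [y1 hy1 ->]] := decomp y.
have brD1 : forall u v w, br (u + v) w = br u w + br v w by move=> u v w; have := brL 1 u v w; rewrite !scale1r.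
have brD2 : forall u v w, br w (u + v) = br w u + br w v by move=> u v w; have := brR 1 w u v; rewrite !scale1r.
rewrite brD1 !brD2 (hom false false) // (hom false true) // (hom true false) // (hom true true) //.
by rewrite !addr0.
Qed.
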